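(* Let $n>d\ge1$, let $X\in\mathbb{R}^{n\times d}$ with $X^\top X$ invertible, let $\theta^*\in\mathbb{R}^d$ with $\|\theta^*\|_2=1$, $y=X\theta^*$, and $\alpha\in\mathbb{R}\setminus\{0\}$. Let $q^{(0)}=\mathbf{0}_d$, $Z^{(0)}=\begin{bmatrix} X & y\\ q^{(0)\top} & \alpha\end{bmatrix}\in\mathbb{R}^{(n+1)\times(d+1)}$, $Q=I_{d+1}$, $P=\begin{bmatrix} I_{d} & \mathbf{0}_{d\times 1}\\ \mathbf{0}_{1\times d} & 0\end{bmatrix}$, let $T\ge1$ be the number of loops, and use step sizes $\eta^{(t)}=1/L$ for all $t$, where $L=\|X^\top X\|$ (spectral norm). Let $\kappa=\lambda_{\max}(X^\top X)/\lambda_{\min}(X^\top X)$. Then $$|\langle \mathsf{TF}(Z^{(0)};Q,P),\theta^*\rangle-\alpha|\le|\alpha|\cdot\exp\!\Big(-\frac{T}{2\kappa}\Big).$$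
   Context: For $Z\in\mathbb{R}^{(n+1)\times(d+1)}$ and $Q,P\in\mathbb{R}^{(d+1)\times(d+1)}$, the linear attention is $\mathsf{Attn}(Z;Q,P):=(M\circ(ZQZ^\top))ZP$, where $\circ$ is the entrywise (Hadamard) product and $M=\begin{bmatrix}\mathbf{0}_{n\times n} & \mathbf{0}_{n\times 1}\\ \mathbf{1}_{1\times n} & 0\end{bmatrix}\in\mathbb{R}^{(n+1)\times(n+1)}$. The linear looped transformer with loop number $T$ and step sizes $\eta^{(t)}>0$ is defined by $Z^{(t)}:=Z^{(t-1)}-\eta^{(t-1)}\mathsf{Attn}(Z^{(t-1)};Q,P)$ for $t\in\{1,\dots,T\}$, and $\mathsf{TF}(Z^{(0)};Q,P):=-\big(Z^{(T)}_{n+1,1:d}\big)^\top\in\mathbb{R}^d$, i.e. minus the first $d$ entries of the last row of $Z^{(T)}$. $\lambda_{\min},\lambda_{\max}$ denote the smallest and largest eigenvalues. *)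

(* Defs.v *)
From HB Require Import structures.
From mathcomp Require Import all_boot all_order all_algebra.
From mathcomp Require Import all_classical all_reals.
From mathcomp Require Import sequences exp.
Set Implicit Arguments. Unset Strict Implicit. Unset Printing Implicit Defensive.
Import Order.TTheory GRing.Theory Num.Theory.
Local Open Scope ring_scope.

Section Defs.
Variable R : realType.

Definition vnorm (m : nat) (v : 'cV[R]_m) : R := Num.sqrt (\sum_i v i 0 ^+ 2).

Definition vdot (m : nat) (u v : 'cV[R]_m) : R := \sum_i u i 0 * v i 0.

Definition spectral_norm (m : nat) (A : 'M[R]_m) : R :=
  sup [set r : R | exists v : 'cV[R]_m, vnorm v <= 1 /\ r = vnorm (A *m v)].

Definition is_lambda_max (m : nat) (A : 'M[R]_m) (l : R) : Prop :=
  eigenvalue A l /\ forall a, eigenvalue A a -> a <= l.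
Definition is_lambda_min (m : nat) (A : 'M[R]_m) (l : R) : Prop :=
  eigenvalue A l /\ forall a, eigenvalue A a -> l <= a.

Definition attn_mask (n : nat) : 'M[R]_(n + 1) :=
  block_mx (0 : 'M_(n, n)) (0 : 'M_(n, 1)) (const_mx 1 : 'M_(1, n)) (0 : 'M_(1, 1)).

Definition Attn (n d : nat) (Z : 'M[R]_(n + 1, d + 1)) (Q P : 'M[R]_(d + 1))
  : 'M[R]_(n + 1, d + 1) :=
  map2_mx (fun a b => a * b) (attn_mask n) (Z *m Q *m Z^T) *m Z *m P.

Fixpoint loopZ (n d : nat) (Z0 : 'M[R]_(n + 1, d + 1)) (Q P : 'M[R]_(d + 1))
  (eta : nat -> R) (t : nat) : 'M[R]_(n + 1, d + 1) :=
  match t with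
  | 0%N => Z0
  | t'.+1 => let Z := loopZ Z0 Q P eta t' in Z - eta t' *: Attn Z Q P
  end.

Definition TF (n d : nat) (Z0 : 'M[R]_(n + 1, d + 1)) (Q P : 'M[R]_(d + 1))
  (eta : nat -> R) (T : nat) : 'cV[R]_d :=
  \col_(j < d) - loopZ Z0 Q P eta T (rshift n (@ord0 0)) (lshift 1 j).

End Defs.

(* Main.v *)
Require Import Defs.
From HB Require Import structures.
From mathcomp Require Import all_boot all_order all_algebra.
From mathcomp Require Import all_classical all_reals.
From mathcomp Require Import sequences exp.
From mathcomp Require Import topology normedtype derive.
From mathcomp Require Import ring lra.
Set Implicit Arguments. Unset Strict Implicit. Unset Printing Implicit Defensive.
Import Order.TTheory GRing.Theory Num.Theory.
Import numFieldNormedType.Exports.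
Local Open Scope ring_scope.

Section Dot.
Variable R : realType.
Variable d : nat.
Implicit Types u v w : 'cV[R]_d.

Definition dot u v := (u^T *m v) 0 0.

Lemma dotE u v : dot u v = \sum_i u i 0 * v i 0.
Proof. by rewrite /dot !mxE; apply: eq_bigr => i _; rewrite mxE. Qed.

Lemma dotC u v : dot u v = dot v u.
Proof. by rewrite !dotE; apply: eq_bigr => i _; rewrite mulrC. Qed.

Lemma dotDl u v w : dot (u + v) w = dot u w + dot v w.
Proof. by rewrite !dotE -big_split; apply: eq_bigr => i _; rewrite mxE mulrDl. Qed.

Lemma dotZl (t : R) u w : dot (t *: u) w = t * dot u w.
Proof. by rewrite !dotE mulr_sumr; apply: eq_bigr => i _; rewrite mxE mulrA. Qed.

Lemma dotNl u w : dot (- u) w = - dot u w.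
Proof. by rewrite -scaleN1r dotZl mulN1r. Qed.

Lemma dotDr u v w : dot w (u + v) = dot w u + dot w v.
Proof. by rewrite dotC dotDl !(dotC w). Qed.

Lemma dotZr (t : R) u w : dot w (t *: u) = t * dot w u.
Proof. by rewrite dotC dotZl dotC. Qed.

Lemma dotNr u w : dot w (- u) = - dot w u.
Proof. by rewrite dotC dotNl dotC. Qed.

Lemma dotBl u v w : dot (u - v) w = dot u w - dot v w.
Proof. by rewrite dotDl dotNl. Qed.

Lemma dotBr u v w : dot w (u - v) = dot w u - dot w v.
Proof. by rewrite dotDr dotNr. Qed.

Lemma dot_ge0 v : 0 <= dot v v.
Proof. by rewrite dotE sumr_ge0 // => i _; rewrite -expr2 sqr_ge0. Qed.

Lemma dot_eq0 v : dot v v = 0 -> v = 0.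
Proof.
rewrite dotE => /eqP; rewrite psumr_eq0 => [/allP H|i _]; last by rewrite -expr2 sqr_ge0.
apply/matrixP => i j; rewrite (ord1 j) mxE.
have := H i (mem_index_enum _); rewrite implyTb -expr2 sqrf_eq0 => /eqP //.
Qed.

Lemma dot_mx (S : 'M[R]_d) u w : S^T = S -> dot u (S *m w) = dot (S *m u) w.
Proof. by move=> hS; rewrite /dot trmx_mul hS mulmxA. Qed.

Lemma dot0l w : dot 0 w = 0.
Proof. by rewrite dotE big1 // => i _; rewrite mxE mul0r. Qed.

End Dot.
Section Quad.
Variable R : realType.
Variable d : nat.
Implicit Types u v w : 'cV[R]_d.

Definition qf (S : 'M[R]_d) v := dot v (S *m v).

Lemma qfD (S : 'M[R]_d) u v : S^T = S ->
  qf S (u + v) = qf S u + 2 * dot u (S *m v) + qf S v.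
Proof.
move=> hS; rewrite /qf mulmxDr !dotDl !dotDr (dot_mx v u hS) (dotC (S *m v) u).
ring.
Qed.

Lemma qfZ (S : 'M[R]_d) (t : R) v : qf S (t *: v) = t ^+ 2 * qf S v.
Proof. by rewrite /qf -scalemxAr dotZl dotZr mulrA expr2. Qed.

Lemma psd_ker (S : 'M[R]_d) c : S^T = S -> (forall v, 0 <= qf S v) ->
  qf S c = 0 -> S *m c = 0.
Proof.
move=> hS hpsd hc; apply: dot_eq0.
pose a : R := dot (S *m c) (S *m c).
pose s : R := qf S (S *m c).
have a0 : 0 <= a := dot_ge0 _.
have s0 : 0 <= s := hpsd _.
have := hpsd (c + (- (a / (s + 1))) *: (S *m c)).
rewrite qfD // hc qfZ -scalemxAr dotZr (dot_mx c _ hS) -/a -/s.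
set t := a / (s + 1).
have ht : t * (s + 1) = a by rewrite /t mulfVK // gt_eqF // ltr_wpDl.
move=> H.
have H2 : 0 <= a * a * (- (s + 2)).
  have -> : a * a * (- (s + 2)) = (0 + 2 * (- t * a) + (- t) ^+ 2 * s) * (s + 1) ^+ 2.
    by rewrite -ht; ring.
  by apply: mulr_ge0 => //; rewrite sqr_ge0.
have : a * a <= 0 by nra.
nra.
Qed.

Lemma qfB (S : 'M[R]_d) u v : S^T = S ->
  qf S (u - v) = qf S u - 2 * dot u (S *m v) + qf S v.
Proof.
move=> hS; rewrite qfD // -scaleN1r qfZ -scalemxAr dotZr; ring.
Qed.

Lemma dotDD u v : dot (u + v) (u + v) = dot u u + 2 * dot u v + dot v v.
Proof. rewrite !(dotDl, dotDr) (dotC v u); ring. Qed.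

Lemma dotBB u v : dot (u - v) (u - v) = dot u u - 2 * dot u v + dot v v.
Proof. rewrite !(dotBl, dotBr) (dotC v u); ring. Qed.

Lemma polar (S : 'M[R]_d) (c : R) : S^T = S -> 0 <= c ->
  (forall v, 0 <= qf S v <= c * dot v v) ->
  forall v, dot (S *m v) (S *m v) <= c ^+ 2 * dot v v.
Proof.
move=> hS c0 hb v.
pose a : R := dot (S *m v) (S *m v); pose b : R := dot v v.
have a0 : 0 <= a := dot_ge0 _.
have b0 : 0 <= b := dot_ge0 _.
have key : forall t, 4 * t * a <= 2 * c * (t ^+ 2 * a + b).
  move=> t.
  have /andP [_ h1] := hb (t *: (S *m v) + v).
  have /andP [h2 _] := hb (t *: (S *m v) - v).
  have h3 : 0 <= c * dot (t *: (S *m v) - v) (t *: (S *m v) - v).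
    by apply: mulr_ge0 => //; apply: dot_ge0.
  move: h1 h2 h3; rewrite qfD // qfB // dotDD dotBB !qfZ !dotZl !dotZr -/a -/b.
  nra.
rewrite -/a -/b.
have [c00|cpos] := eqVneq c 0.
  have := key 1; rewrite c00 expr0n /=; nra.
have cp : 0 < c by rewrite lt_def cpos c0.
have := key c^-1.
have hc : c * c^-1 = 1 by rewrite mulfV.
move: (c^-1) hc => ci hc H.
have H1 : ci * a <= c * b.
  have : 2 * c * (ci ^+ 2 * a + b) = 2 * ci * a + 2 * c * b.
    have -> : 2 * c * (ci ^+ 2 * a + b) = 2 * (c * ci) * ci * a + 2 * c * b by ring.
    by rewrite hc; ring.
  lra.
have : c * (ci * a) <= c * (c * b) by rewrite ler_wpM2l // ltW.
have e1 : c * (ci * a) = a by rewrite mulrA hc mul1r.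
have e2 : c * (c * b) = c ^+ 2 * b by rewrite mulrA expr2.
lra.
Qed.

Lemma cauchy_schwarz u w : (dot u w) ^+ 2 <= dot u u * dot w w.
Proof.
have [w0|wn0] := eqVneq (dot w w) 0.
  by rewrite (dot_eq0 w0) (dotC u 0) !dot0l expr0n mulr0.
have wp : 0 < dot w w by rewrite lt_def wn0 dot_ge0.
set t := dot u w / dot w w.
have := dot_ge0 (u - t *: w).
rewrite !(dotBl, dotBr, dotZl, dotZr) (dotC w u).
have ht : t * dot w w = dot u w by rewrite /t mulfVK.
nra.
Qed.

End Quad.
Section Ray.
Variable R : realType.

Lemma cont_sum (T : topologicalType) n (F : 'I_n -> T -> R) :
  (forall i, continuous (F i)) -> continuous (fun x => \sum_(i < n) F i x).
Proof.
move=> hF x; elim: n F hF => [|n IH] F hF.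
  rewrite (_ : (fun x => _) = fun=> 0); first exact: cst_continuous.
  by apply: funext => y; rewrite big_ord0.
rewrite (_ : (fun x => _) = (fun x => \sum_(i < n) F (widen_ord (leqnSn n) i) x
   + F ord_max x)); last by apply: funext => y; rewrite big_ord_recr.
apply: continuousD; last exact: hF.
by apply: IH => i; exact: hF.
Qed.

Lemma cont_qf d (S : 'M[R]_d) :
  continuous (fun w : 'rV[R]_d => qf S w^T).
Proof.
rewrite (_ : (fun w => _) = (fun w : 'rV[R]_d => \sum_i (w 0 i * \sum_j (S i j * w 0 j)))).
  apply: cont_sum => i w; apply: continuousM; first exact: coord_continuous.
  apply: cont_sum => j {}w; apply: continuousM; first exact: cst_continuous.
  exact: coord_continuous.
apply: funext => w; rewrite /qf dotE; apply: eq_bigr => i _.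
by rewrite !mxE; congr (_ * _); apply: eq_bigr => j _; rewrite !mxE.
Qed.

End Ray.
Section Ray2.
Variable R : realType.
Local Open Scope classical_set_scope.

Lemma rayleigh_min d (S : 'M[R]_d) : (0 < d)%N -> S^T = S ->
  exists m : R, (exists2 c : 'cV[R]_d, c != 0 & S *m c = m *: c) /\
    forall v, m * dot v v <= qf S v.
Proof.
move=> d0 hS.
pose g := fun w : 'rV[R]_d => qf 1%:M w^T.
have gE w : g w = dot w^T w^T by rewrite /g /qf mul1mx.
pose sph := [set w : 'rV[R]_d | g w = 1].
pose box := [set w : 'rV[R]_d | forall i, `[-1, 1]%classic (w ord0 i)].
have cbox : compact box.
  have := @rV_compact R d (fun=> `[-1, 1]%classic) (fun=> @segment_compact R (-1) 1).
  by [].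

have csph : closed sph.
  have := (continuous_closedP g).1 (@cont_qf R d 1%:M) _ (@closed_eq _ (1 : R)).
  by [].
have sphbox : sph `<=` box.
  move=> w; rewrite /sph /= gE dotE => h i.
  have : w ord0 i * w ord0 i <= 1.
    rewrite -h (bigD1 i) //= !mxE ler_wpDr // sumr_ge0 // => j _.
    by rewrite !mxE -expr2 sqr_ge0.
  by move=> hi; rewrite /= in_itv /=; apply/andP; split; nra.
have sph0 : sph !=set0.
  pose i0 := Ordinal d0.
  exists (\row_j ((j == i0)%:R : R)); rewrite /sph /= gE dotE (bigD1 i0) //= big1.
    by rewrite !mxE eqxx mulr1 addr0.
  by move=> j /negPf hj; rewrite !mxE hj mulr0.
have hcont : {within sph, continuous (fun w : 'rV[R]_d => qf S w^T)}.
  by apply: continuous_subspaceT; exact: cont_qf.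
have [c csph' cmin] := compact_EVT_min sph0 (subclosed_compact csph cbox sphbox) hcont.
rewrite inE in csph'.
have cg : dot c^T c^T = 1 by rewrite -gE.
have cmin' : forall w : 'rV[R]_d, dot w^T w^T = 1 -> qf S c^T <= qf S w^T.
  by move=> w hw; apply: cmin; rewrite inE /sph /= gE.
exists (qf S c^T).
have hmin : forall v, qf S c^T * dot v v <= qf S v.
  move=> v; have [->|vn0] := eqVneq v 0.
    by rewrite /qf dot0l mulr0 mulmx0 dotC dot0l.
  have vp : 0 < dot v v.
    by rewrite lt_def dot_ge0 andbT; apply/eqP => /dot_eq0 /eqP; rewrite (negPf vn0).
  pose s := Num.sqrt (dot v v).
  have sp : 0 < s by rewrite sqrtr_gt0.
  have ss : s ^+ 2 = dot v v by rewrite sqr_sqrtr // ltW.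
  have := cmin' (s^-1 *: v)^T.
  rewrite trmxK dotZl dotZr => /(_ _).
  have h1 : s^-1 * (s^-1 * dot v v) = 1.
    by rewrite -ss mulrA -expr2 -exprMn mulVf ?gt_eqF // expr1n.
  move=> /(_ h1); rewrite qfZ => H.
  have : s ^+ 2 * qf S c^T <= s ^+ 2 * (s^-1 ^+ 2 * qf S v).
    by rewrite ler_wpM2l // sqr_ge0.
  by rewrite mulrA -exprMn mulfV ?gt_eqF // expr1n mul1r ss mulrC.
split=> //.
exists c^T.
  by apply/eqP => c0; move: cg; rewrite c0 dot0l => /eqP; rewrite eq_sym oner_eq0.
apply/eqP; rewrite -subr_eq0 -mul_scalar_mx -mulmxBl; apply/eqP.
apply: psd_ker.
- by rewrite linearB /= hS tr_scalar_mx.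
- by move=> v; rewrite /qf mulmxBl mul_scalar_mx dotBr dotZr subr_ge0 hmin.
- by rewrite /qf mulmxBl mul_scalar_mx dotBr dotZr cg mulr1 subrr.
Qed.

End Ray2.
Section Loop.
Variable R : realType.
Variables (n d : nat) (X : 'M[R]_(n, d)) (y : 'cV[R]_n) (a : 'M[R]_1).
Let P : 'M[R]_(d + 1) := block_mx (1%:M : 'M_d) (0 : 'M_(d, 1)) (0 : 'M_(1, d)) (0 : 'M_1).

Lemma attn_block (p : 'rV[R]_d) :
  Attn (block_mx X y p a) 1%:M P =
  block_mx 0 0 ((p *m X^T + a *m y^T) *m X) 0.
Proof.
rewrite /Attn mulmx1 tr_block_mx mulmx_block /attn_mask map2_block_mx.
have m0 m k (M : 'M[R]_(m, k)) : map2_mx (fun a0 b => a0 * b) 0 M = 0.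
  by apply/matrixP => i j; rewrite !mxE mul0r.
have m1 m k (M : 'M[R]_(m, k)) : map2_mx (fun a0 b => a0 * b) (const_mx 1) M = M.
  by apply/matrixP => i j; rewrite !mxE mul1r.
rewrite !m0 m1 mulmx_block /P mulmx_block.
rewrite !mul0mx !mulmx0 !mulmx1 !addr0 ?add0r.
done.
Qed.

Fixpoint pseq (eta : nat -> R) (t : nat) : 'rV[R]_d :=
  match t with
  | 0%N => 0
  | t'.+1 => pseq eta t' - eta t' *: ((pseq eta t' *m X^T + a *m y^T) *m X)
  end.

Lemma loop_block (eta : nat -> R) t :
  loopZ (block_mx X y 0 a) 1%:M P eta t = block_mx X y (pseq eta t) a.
Proof.
elim: t => [//|t IH] /=.
rewrite IH attn_block scale_block_mx opp_block_mx add_block_mx.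
by rewrite !scaler0 !oppr0 !addr0.
Qed.
End Loop.
Section Alg.
Variable R : realType.
Variables (n d : nat) (X : 'M[R]_(n, d)) (theta : 'cV[R]_d) (alpha eta : R).
Let A := X^T *m X.
Let B : 'M[R]_d := 1%:M - eta *: A.

Lemma A_sym : A^T = A.
Proof. by rewrite /A trmx_mul trmxK. Qed.

Lemma B_sym : B^T = B.
Proof. by rewrite /B linearB /= linearZ /= A_sym tr_scalar_mx. Qed.

Lemma pseq_eq t :
  pseq X (X *m theta) alpha%:M (fun=> eta) t =
  alpha *: ((iter t (mulmx B) theta)^T - theta^T).
Proof.
elim: t => [|t IH] /=.
  by rewrite subrr scaler0.
rewrite IH.
set u := iter t (mulmx B) theta.
rewrite mul_scalar_mx trmx_mul -scalemxAl mulmxBl -scalerDr subrK -scalemxAl -mulmxA -/A.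
rewrite trmx_mul B_sym /B mulmxBr mulmx1 -scalemxAr.
by apply/matrixP => i j; rewrite !mxE; ring.
Qed.
End Alg.
Section Bound.
Variable R : realType.
Variable d : nat.

Lemma iter_bound (A : 'M[R]_d) (lmin lmax : R) (theta : 'cV[R]_d) T :
  A^T = A -> 0 < lmin -> lmin <= lmax ->
  (forall v, lmin * dot v v <= qf A v <= lmax * dot v v) ->
  dot theta theta = 1 ->
  `| dot (iter T (mulmx (1%:M - lmax^-1 *: A)) theta) theta | <= (1 - lmin / lmax) ^+ T.
Proof.
move=> hA l0 l01 hray ht.
have lmp : 0 < lmax by apply: lt_le_trans l01.
set B := 1%:M - lmax^-1 *: A.
set c := 1 - lmin / lmax.
have c0 : 0 <= c.
  by rewrite /c subr_ge0 ler_pdivrMr // mul1r.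
have hB : B^T = B by rewrite /B linearB /= linearZ /= hA tr_scalar_mx.
have qB v : qf B v = dot v v - lmax^-1 * qf A v.
  by rewrite /qf /B mulmxBl mul1mx -scalemxAl dotBr dotZr.
have hb v : 0 <= qf B v <= c * dot v v.
  rewrite qB /c; have /andP [h1 h2] := hray v.
  have hv := dot_ge0 v.
  have e1 : lmax^-1 * qf A v <= dot v v.
    by rewrite ler_pdivrMl // mulrC.
  have e2 : lmin / lmax * dot v v <= lmax^-1 * qf A v.
    have -> : lmin / lmax * dot v v = lmax^-1 * (lmin * dot v v) by ring.
    by rewrite ler_pM2l ?invr_gt0.
  apply/andP; split; lra.
have hp := polar hB c0 hb.
have hit : forall t, dot (iter t (mulmx B) theta) (iter t (mulmx B) theta) <= (c ^+ 2) ^+ t.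
  elim => [|t IH] /=; first by rewrite ht expr0.
  apply: le_trans (hp _) _; rewrite [X in _ <= X]exprS; apply: ler_wpM2l => //; exact: sqr_ge0.
have cs := cauchy_schwarz (iter T (mulmx B) theta) theta.
rewrite ht mulr1 in cs.
have h2 := le_trans cs (hit T).
rewrite -exprM mulnC exprM in h2.
have cT : 0 <= c ^+ T by rewrite exprn_ge0.
rewrite ler_norml; apply/andP; split; nra.
Qed.

End Bound.
Section Spec.
Variable R : realType.
Variable d : nat.
Local Open Scope classical_set_scope.

Lemma vnormE (v : 'cV[R]_d) : vnorm v = Num.sqrt (dot v v).
Proof. by rewrite /vnorm dotE; congr Num.sqrt; apply: eq_bigr => i _; rewrite expr2. Qed.

Lemma spec_norm_eq (A : 'M[R]_d) lmax : A^T = A -> 0 <= lmax ->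
  (forall v, 0 <= qf A v <= lmax * dot v v) ->
  (exists2 c : 'cV[R]_d, c != 0 & A *m c = lmax *: c) ->
  spectral_norm A = lmax.
Proof.
move=> hA l0 hb [c cn0 hc].
pose E := [set r : R | exists v : 'cV[R]_d, vnorm v <= 1 /\ r = vnorm (A *m v)].
have ub : ubound E lmax.
  move=> r [v [hv ->]]; rewrite vnormE.
  have h1 := polar hA l0 hb v.
  have hv' : dot v v <= 1.
    move: hv; rewrite vnormE => hv.
    have : Num.sqrt (dot v v) ^+ 2 <= 1.
      rewrite -(expr1n _ 2%N); apply: lerXn2r => //; rewrite ?nnegrE ?sqrtr_ge0 //.
    by rewrite sqr_sqrtr // dot_ge0.
  have h2 : dot (A *m v) (A *m v) <= lmax ^+ 2.
    apply: le_trans h1 _; rewrite -[X in _ <= X]mulr1; apply: ler_wpM2l => //.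
    exact: sqr_ge0.
  rewrite -(ger0_norm l0) -sqrtr_sqr; apply: ler_wsqrtr h2.
have cp : 0 < dot c c.
  by rewrite lt_def dot_ge0 andbT; apply/eqP => /dot_eq0 /eqP; rewrite (negPf cn0).
pose s := Num.sqrt (dot c c).
have sp : 0 < s by rewrite sqrtr_gt0.
have ss : s ^+ 2 = dot c c by rewrite sqr_sqrtr // ltW.
have inE0 : E lmax.
  exists (s^-1 *: c); split.
    rewrite vnormE dotZl dotZr -ss mulrA -expr2 -exprMn mulVf ?gt_eqF // expr1n.
    by rewrite sqrtr1.
  rewrite vnormE -scalemxAr hc !(dotZl, dotZr) -ss.
  have -> : s^-1 * (lmax * (s^-1 * (lmax * s ^+ 2))) = lmax ^+ 2.
    by field; rewrite gt_eqF.
  by rewrite sqrtr_sqr ger0_norm.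
apply/le_anti/andP; split.
  by apply: ge_sup => //; exists lmax.
apply: sup_upper_bound => //; split; first by exists lmax.
by exists lmax.
Qed.

End Spec.
Unset Implicit Arguments.
Theorem mainTheorem4 (R : realType) (n d : nat) (hd : (1 <= d)%N) (hnd : (d < n)%N)
  (X : 'M[R]_(n, d)) (hX : X^T *m X \in unitmx)
  (theta : 'cV[R]_d) (htheta : vnorm theta = 1)
  (alpha : R) (halpha : alpha != 0)
  (T : nat) (hT : (1 <= T)%N)
  (lmin lmax : R)
  (hmin : is_lambda_min (X^T *m X) lmin) (hmax : is_lambda_max (X^T *m X) lmax) :
  let y : 'cV[R]_n := X *m theta in
  let q0 : 'cV[R]_d := 0 in
  let Z0 : 'M[R]_(n + 1, d + 1) := block_mx X y q0^T (alpha%:M : 'M_1) in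
  let Q : 'M[R]_(d + 1) := 1%:M in
  let P : 'M[R]_(d + 1) :=
    block_mx (1%:M : 'M_d) (0 : 'M_(d, 1)) (0 : 'M_(1, d)) (0 : 'M_1) in
  let L := spectral_norm (X^T *m X) in
  let eta : nat -> R := fun _ => L^-1 in
  let kappa := lmax / lmin in
  `| vdot (TF Z0 Q P eta T) theta - alpha | <= `|alpha| * expR (- (T%:R / (2 * kappa))).
Proof.
cbv zeta.
have hA : (X^T *m X)^T = X^T *m X by rewrite trmx_mul trmxK.
set A := X^T *m X in hA hX hmin hmax *.
have d0 : (0 < d)%N by [].
have [m [[c cn0 hc] hm]] := rayleigh_min d0 hA.
have hA' : (- A)^T = - A by rewrite linearN /= hA.
have [m' [[c' cn0' hc'] hm']] := rayleigh_min d0 hA'.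
have trn0 (v : 'cV[R]_d) : v != 0 -> v^T != 0.
  by apply: contra => /eqP h; apply/eqP; rewrite -[v]trmxK h trmx0.
have lm : lmin <= m.
  apply: hmin.2; apply/eigenvalueP; exists c^T; last exact: trn0.
  by rewrite -{1}hA -trmx_mul hc linearZ.
have lM : - m' <= lmax.
  apply: hmax.2; apply/eigenvalueP; exists c'^T; last exact: trn0.
  rewrite -{1}hA -trmx_mul.
  have -> : A *m c' = - m' *: c'.
    by rewrite scaleNr -hc' mulNmx opprK.
  by rewrite linearZ.
have hray v : lmin * dot v v <= qf A v <= lmax * dot v v.
  have hv := dot_ge0 v.
  apply/andP; split.
    by apply: le_trans (hm v); rewrite ler_wpM2r.
  have := hm' v; rewrite /qf mulNmx dotNr => h.
  have : m' * dot v v >= - lmax * dot v v by rewrite ler_wpM2r // lerNl.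
  rewrite /qf; lra.
have /eigenvalueP [w wE wn0] := hmin.1.
have lmin0 : 0 < lmin.
  pose u := w^T.
  have hu : A *m u = lmin *: u by rewrite /u -{1}hA -trmx_mul wE linearZ.
  have un0 : u != 0 by rewrite /u; apply: contra wn0 => /eqP h; rewrite -[w]trmxK h trmx0.
  have up : 0 < dot u u.
    by rewrite lt_def dot_ge0 andbT; apply/eqP => /dot_eq0 /eqP; rewrite (negPf un0).
  have q0' : qf A u = lmin * dot u u by rewrite /qf hu dotZr.
  have qpos : 0 <= qf A u.
    rewrite /qf /A /dot -mulmxA mulmxA -trmx_mul; exact: dot_ge0.
  have l0 : 0 <= lmin.
    have : 0 <= lmin * dot u u by rewrite -q0'.
    by rewrite pmulr_lge0.
  rewrite lt_def l0 andbT; apply/eqP => hl0.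
  move: hu; rewrite hl0 scale0r => hu.
  move: un0; rewrite -(mulKmx hX u) hu mulmx0 eqxx //.
have l01 : lmin <= lmax := hmax.2 _ hmin.1.
have lmax0 : 0 < lmax := lt_le_trans lmin0 l01.
have hL : spectral_norm A = lmax.
  apply: spec_norm_eq => //; first exact: ltW.
    move=> v; have /andP [h1 h2] := hray v; rewrite h2 andbT.
    by apply: le_trans h1; rewrite mulr_ge0 // ?dot_ge0 // ltW.
  have /eigenvalueP [w' wE' wn0'] := hmax.1.
  exists w'^T; first by apply: contra wn0' => /eqP h; rewrite -[w']trmxK h trmx0.
  by rewrite -{1}hA -trmx_mul wE' linearZ.
rewrite hL trmx0.
set u := iter T (mulmx (1%:M - lmax^-1 *: A)) theta.
have TFE : TF (block_mx X (X *m theta) 0 alpha%:M) 1%:M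
   (block_mx (1%:M : 'M_d) (0 : 'M_(d, 1)) (0 : 'M_(1, d)) (0 : 'M_1)) (fun=> lmax^-1) T
   = - (alpha *: (u - theta)).
  rewrite /TF loop_block pseq_eq -/A -/u; apply/matrixP => i j.
  by rewrite mxE block_mxEdl !mxE (ord1 j).
rewrite TFE.
have vd (a b : 'cV[R]_d) : vdot a b = dot a b by rewrite dotE.
have htt : dot theta theta = 1.
  by move: htheta; rewrite vnormE => h; rewrite -(sqr_sqrtr (dot_ge0 theta)) h expr1n.
rewrite vd dotNl dotZl dotBl htt.
have -> : - (alpha * (dot u theta - 1)) - alpha = - alpha * dot u theta by ring.
rewrite normrM normrN ler_wpM2l //.
apply: le_trans (iter_bound T hA lmin0 l01 hray htt) _.
set r := lmin / lmax.
have r0 : 0 <= r by rewrite /r divr_ge0 // ltW.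
have r1 : r <= 1 by rewrite /r ler_pdivrMr // mul1r.
have c0 : 0 <= 1 - r by rewrite subr_ge0.
apply: (@le_trans _ _ (expR (- r) ^+ T)).
  apply: lerXn2r; rewrite ?nnegrE ?expR_ge0 //.
  by have := expR_ge1Dx (- r); rewrite addrC.
rewrite -expRM_natl ler_expR.
have -> : T%:R / (2 * (lmax / lmin)) = T%:R * r / 2.
  by rewrite /r; field; rewrite ?gt_eqF.
have : 0 <= T%:R * r :> R by rewrite mulr_ge0.
lra.
Qed.
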